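(* Let $G$ be a simple graph, $x\ne y$ vertices of $G$, and let $G'$ be obtained from $G$ by the $\diamondsuit_{xy}$-operation. Then $h_0(G)\ge h_0(G')$ and $h_1(G)\ge h_1(G')$.
   Context: All graphs are finite, undirected, without loops; $N(v)$ is the neighbourhood of $v$. The $\diamondsuit_{xy}$-operation: with $X=N(x)\setminus(N(y)\cup\{y\})$, $G'=(G-\{xv:v\in X\})\cup\{yv:v\in X\}$ on the same vertex set. $h_0(G)$ and $h_1(G)$ denote the numbers of Hamiltonian cycles and of Hamiltonian paths (as subgraphs) of $G$, respectively. *)

(* Defs.v *)
From mathcomp Require Import all_boot.
Set Implicit Arguments. Unset Strict Implicit. Unset Printing Implicit Defensive.

(* A simple graph on a finite vertex type T is a relation e : rel T that is
   symmetric and irreflexive (these are hypotheses of the theorem). *)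

Definition nbhd (T : finType) (e : rel T) (v : T) : {set T} := [set w | e v w].

Definition diamX (T : finType) (e : rel T) (x y : T) : {set T} :=
  nbhd e x :\: (y |: nbhd e y).

(* G' = (G - {xv : v in X}) ∪ {yv : v in X}, same vertex set. *)
Definition diamond (T : finType) (e : rel T) (x y : T) : rel T :=
  fun u v =>
    (e u v && ~~ (((u == x) && (v \in diamX e x y)) || ((v == x) && (u \in diamX e x y))))
    || ((u == y) && (v \in diamX e x y)) || ((v == y) && (u \in diamX e x y)).

Fixpoint path_edges (T : finType) (s : seq T) : {set {set T}} :=
  match s with
  | u :: ((v :: _) as s') => [set u; v] |: path_edges s'
  | _ => set0
  end.

Definition cycle_edges (T : finType) (s : seq T) : {set {set T}} :=
  if s is u :: p then path_edges (u :: rcons p u) else set0.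

Definition epath (T : finType) (e : rel T) (s : seq T) : bool :=
  if s is u :: p then path e u p else true.

(* Hamiltonian paths as subgraphs: edge sets of spanning paths of G. *)
Definition ham_paths (T : finType) (e : rel T) : {set {set {set T}}} :=
  [set F | [exists t : #|T|.-tuple T,
             [&& uniq t, epath e t & F == path_edges t]]].

Definition ham_cycles (T : finType) (e : rel T) : {set {set {set T}}} :=
  [set F | [exists t : #|T|.-tuple T,
             [&& 2 < #|T|, uniq t, cycle e t & F == cycle_edges t]]].

Definition h0 (T : finType) (e : rel T) : nat := #|ham_cycles e|.
Definition h1 (T : finType) (e : rel T) : nat := #|ham_paths e|.

(* Main.v *)
Require Import Defs.
From mathcomp Require Import all_boot.
From Stdlib Require Import ClassicalEpsilon Classical.
Set Implicit Arguments. Unset Strict Implicit. Unset Printing Implicit Defensive.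

Ltac bsplit := repeat match goal with
  | |- context [?A \in ?B] => case: (A \in B)
  | |- context [?A == ?B] => case: (A == B) end.
Ltac ssolve := apply/setP=> ?; rewrite !inE; bsplit.

Section S.
Variable T : finType.
Implicit Types (s A B C P Q S : seq T) (u v w z a b c : T).

Definition jn (s1 s2 : seq T) : {set {set T}} :=
  match s1, s2 with
  | a :: s1', b :: _ => [set [set last a s1'; b]]
  | _, _ => set0
  end.

Lemma set2_eq a b c d : [set a; b] = [set c; d] :> {set T} -> (a = c /\ b = d) \/ (a = d /\ b = c).
Proof.
move=> H.
have ha : a \in [set c; d] by rewrite -H !inE eqxx.
have hb : b \in [set c; d] by rewrite -H !inE eqxx orbT.
have hc : c \in [set a; b] by rewrite H !inE eqxx.
have hd : d \in [set a; b] by rewrite H !inE eqxx orbT.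
move: ha hb hc hd; rewrite !inE.
by case/orP=>/eqP-> ; case/orP=>/eqP->; case/orP=>/eqP ?; case/orP=>/eqP ?; subst; auto.
Qed.

Lemma jn0s s : jn [::] s = set0. Proof. by []. Qed.
Lemma jns0 s : jn s [::] = set0. Proof. by case: s. Qed.
Lemma jn1 a b s : jn [:: a] (b :: s) = [set [set a; b]]. Proof. by []. Qed.
Lemma jnc a b s1 s2 : jn (a :: b :: s1) s2 = jn (b :: s1) s2. Proof. by []. Qed.
Lemma E0 : path_edges [::] = set0 :> {set {set T}}. Proof. by []. Qed.
Lemma E1 a : path_edges [:: a] = set0. Proof. by []. Qed.

Lemma E_cons a s : path_edges (a :: s) = jn [:: a] s :|: path_edges s.
Proof. by case: s => [|b s] //=; rewrite setU0. Qed.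

Lemma E_cat s1 s2 : path_edges (s1 ++ s2) = path_edges s1 :|: path_edges s2 :|: jn s1 s2.
Proof.
elim: s1 => [|a s1 IH]; first by rewrite /= set0U setU0.
rewrite cat_cons E_cons IH E_cons.
case: s1 {IH} => [|b s1].
  by rewrite cat0s E0 jns0 jn0s !set0U setU0 setUC.
rewrite jnc cat_cons jn1.
by ssolve.
Qed.

Lemma E_rcons s a : path_edges (rcons s a) = path_edges s :|: jn s [:: a].
Proof. by rewrite -cats1 E_cat setU0. Qed.

Lemma jn_rcons s b c t : jn (rcons s b) (c :: t) = [set [set b; c]].
Proof. by case: s => [|d s] //=; rewrite last_rcons. Qed.

Lemma set2C a b : [set a; b] = [set b; a] :> {set T}.
Proof. by apply/setP=> z; rewrite !inE orbC. Qed.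

Lemma E_rev s : path_edges (rev s) = path_edges s.
Proof.
elim: s => [|a s IH] //.
rewrite rev_cons E_rcons IH E_cons setUC.
case: s {IH} => [|b s]; first by rewrite /= setU0.
by rewrite rev_cons jn_rcons jn1 set2C.
Qed.

Lemma E_mem s (F : {set T}) z : F \in path_edges s -> z \in F -> z \in s.
Proof.
elim: s => [|a s IH]; first by rewrite E0 inE.
rewrite E_cons inE => /orP[]; last by move=> H Hz; rewrite inE (IH H Hz) orbT.
case: s {IH} => [|b s]; first by rewrite jns0 inE.
rewrite jn1 inE => /eqP-> /set2P[]->; by rewrite !inE eqxx ?orbT.
Qed.

Lemma E_map (f : T -> T) s :
  path_edges (map f s) = [set [set f x | x in F] | F : {set T} in path_edges s].
Proof.
elim: s => [|a s IH]; first by rewrite /= imset0.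
rewrite map_cons E_cons IH E_cons imsetU.
congr (_ :|: _).
case: s {IH} => [|b s]; first by rewrite /= imset0.
by rewrite map_cons !jn1 imset_set1 imsetU1 imset_set1.
Qed.

Lemma epathP (g : rel T) s : symmetric g ->
  epath g s <-> (forall u v, [set u; v] \in path_edges s -> g u v).
Proof.
move=> gs; case: s => [|a s]; first by split=> // _ u v; rewrite E0 inE.
rewrite /epath.
elim: s a => [|b s IH] a; first by split=> // _ u v; rewrite E1 inE.
rewrite E_cons jn1 /=; split.
  case/andP=> gab /IH H u v; rewrite !inE => /orP[/eqP|]; last exact: H.
  by case/set2_eq=> [[-> ->]|[-> ->]] //; rewrite gs.
move=> H; rewrite H ?inE ?eqxx //=; apply/IH=> u v Huv; apply: H; by rewrite inE Huv orbT.
Qed.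

Lemma cycle_edgesE s : cycle_edges s = path_edges s :|: jn s s.
Proof.
case: s => [|a p]; first by rewrite /= setU0.
rewrite /cycle_edges.
have -> : a :: rcons p a = rcons (a :: p) a by [].
by rewrite E_rcons.
Qed.

Lemma cycleP (g : rel T) s : symmetric g ->
  cycle g s <-> (forall u v, [set u; v] \in cycle_edges s -> g u v).
Proof.
move=> gs; case: s => [|a p]; first by split=> // _ u v; rewrite /cycle_edges inE.
have -> : cycle g (a :: p) = epath g (a :: rcons p a) by [].
exact: epathP.
Qed.

Lemma cycle_edges_rot s1 s2 : cycle_edges (s1 ++ s2) = cycle_edges (s2 ++ s1).
Proof.
case: s1 => [|a s1]; first by rewrite cats0.
case: s2 => [|b s2]; first by rewrite cats0.
rewrite !cycle_edgesE !E_cat.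
have -> : jn ((a :: s1) ++ b :: s2) ((a :: s1) ++ b :: s2) = jn (b :: s2) (a :: s1).
  by rewrite /= last_cat.
have -> : jn ((b :: s2) ++ a :: s1) ((b :: s2) ++ a :: s1) = jn (a :: s1) (b :: s2).
  by rewrite /= last_cat.
by ssolve.
Qed.

Lemma nbr A B z u : z \notin A -> z \notin B ->
  [set z; u] \in path_edges (A ++ z :: B) ->
  u = z \/ (exists A', A = rcons A' u) \/ (exists B', B = u :: B').
Proof.
move=> zA zB; rewrite E_cat E_cons !inE -!orbA.
have nz s : z \notin s -> [set z; u] \notin path_edges s.
  by move=> zs; apply/negP=> /E_mem /(_ (set21 _ _)); apply/negP.
rewrite (negbTE (nz _ zA)) (negbTE (nz _ zB)) !orFb.
case/orP.
  case: B zB => [|b B] _; first by rewrite jns0 inE.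
  rewrite jn1 inE => /eqP /set2_eq [[_ ->]|[_ ->]]; eauto.
case/lastP: A zA => [|A a] _; first by rewrite jn0s inE.
rewrite jn_rcons inE => /eqP /set2_eq [[_ ->]|[_ ->]]; eauto.
Qed.
End S.

Section G.
Variable T : finType.
Variable e : rel T.
Hypothesis e_sym : symmetric e.
Hypothesis e_irr : irreflexive e.
Variables x y : T.
Hypothesis hxy : x != y.
Implicit Types (s A B C P Q : seq T) (u v w z a b c : T).

Local Notation X := (diamX e x y).
Local Notation Y := (diamX e y x).
Local Notation e' := (diamond e x y).

Lemma inX u : (u \in X) = [&& e x u, u != y & ~~ e y u].
Proof. by rewrite /diamX /nbhd !inE negb_or andbC andbA. Qed.
Lemma inY u : (u \in Y) = [&& e y u, u != x & ~~ e x u].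
Proof. by rewrite /diamX /nbhd !inE negb_or andbC andbA. Qed.

Lemma xnX : x \notin X. Proof. by rewrite inX e_irr. Qed.
Lemma ynX : y \notin X. Proof. by rewrite inX eqxx andbF. Qed.
Lemma xnY : x \notin Y. Proof. by rewrite inY eqxx andbF. Qed.
Lemma ynY : y \notin Y. Proof. by rewrite inY e_irr. Qed.
Lemma XnY u : u \in X -> u \in Y -> False.
Proof. by rewrite inX inY => /and3P[_ _ /negbTE->]. Qed.

Lemma d_sym : symmetric e'.
Proof.
move=> u v; rewrite /diamond e_sym; by case: (e v u); bsplit.
Qed.

Lemma d_irr : irreflexive e'.
Proof.
move=> u; rewrite /diamond e_irr /=.
by case: eqP => [->|_]; rewrite ?(negbTE ynX).
Qed.

Lemma d_cases a b : e' a b -> e a b \/ (a = y /\ b \in X) \/ (b = y /\ a \in X).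
Proof.
rewrite /diamond => /orP[/orP[/andP[H _]|/andP[/eqP-> H]]|/andP[/eqP-> H]]; auto.
Qed.

Lemma d_x b : e' x b -> b != y -> e x b /\ e y b.
Proof.
move=> H by'; move: H; rewrite /diamond eqxx (negbTE hxy) (negbTE by') /= !orbF.
case/andP=> exb; rewrite negb_or => /andP[bX _].
by split=> //; move: bX; rewrite inX exb by' /= negbK.
Qed.

Lemma d_xX v : v \in X -> ~~ e' x v.
Proof.
move=> vX; apply/negP=> H.
have vy : v != y by apply: contraTneq vX => ->; exact: ynX.
have [_ eyv] := d_x H vy.
by move: vX; rewrite inX eyv !andbF.
Qed.

Lemma d_xY w : w \in Y -> ~~ e' x w.
Proof.
move=> wY; apply/negP=> H.
have wy : w != y by apply: contraTneq wY => ->; exact: ynY.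
have [exw _] := d_x H wy.
by move: wY; rewrite inY exw !andbF.
Qed.

Lemma d_out a b : a != x -> a != y -> b != x -> b != y -> e' a b = e a b.
Proof.
move=> ax ay bx byy; rewrite /diamond (negbTE ax) (negbTE ay) (negbTE bx) (negbTE byy).
by rewrite /= andbT !orbF.
Qed.

Lemma d_y b : b != x -> b != y -> e' y b = e y b || (b \in X).
Proof.
move=> bx byy; rewrite /diamond eq_sym (negbTE hxy) (negbTE bx) (negbTE byy) eqxx.
by rewrite /= andbT !orbF.
Qed.

Lemma d_xy : e' x y = e x y.
Proof.
rewrite /diamond eqxx (negbTE hxy) eq_sym (negbTE hxy) /= (negbTE ynX) (negbTE xnX).
by rewrite andbF /= andbT !orbF.
Qed.

Definition okE (g : rel T) (F : {set {set T}}) := forall u v, [set u; v] \in F -> g u v.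
Definition hasE (F : {set {set T}}) z (S : {set T}) := exists u, u \in S /\ [set z; u] \in F.

Definition sw u := if u == x then y else if u == y then x else u.
Lemma swK : involutive sw.
Proof.
move=> u; rewrite /sw; case: (eqVneq u x) => [->|ux]; first by rewrite eqxx eq_sym (negbTE hxy).
case: (eqVneq u y) => [->|uy]; first by rewrite eqxx.
by rewrite (negbTE ux) (negbTE uy).
Qed.
Lemma sw_inj : injective sw. Proof. exact: inv_inj swK. Qed.
Lemma swx : sw x = y. Proof. by rewrite /sw eqxx. Qed.
Lemma swy : sw y = x. Proof. by rewrite /sw eqxx eq_sym (negbTE hxy). Qed.
Lemma swo u : u != x -> u != y -> sw u = u.
Proof. by move=> ux uy; rewrite /sw (negbTE ux) (negbTE uy). Qed.

Definition sig (F : {set {set T}}) : {set {set T}} := [set [set sw u | u in A] | A : {set T} in F].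
Lemma sig_inj : injective sig. Proof. exact: imset_inj (imset_inj sw_inj). Qed.

Lemma sig_mem u v F : ([set u; v] \in sig F) = ([set sw u; sw v] \in F).
Proof.
have -> : [set u; v] = [set sw z | z in [set sw u; sw v]].
  by rewrite imsetU1 imset_set1 !swK.
by rewrite /sig mem_imset //; exact: imset_inj sw_inj.
Qed.


Definition rel3 (F K : {set {set T}}) := exists v R J J',
  [/\ v \in X, F = R :|: [set [set y; v]] :|: J, K = R :|: [set [set x; v]] :|: J',
      [set x; v] \notin R &
  [/\ (J = set0 /\ J' = set0) \/
       exists c, [/\ e x c, e y c, J = [set [set x; c]], J' = [set [set y; c]] & [set y; c] \notin R],
      ~ hasE F x X, (forall c, e x c -> e y c -> [set y; c] \notin F) & hasE K y Y]].

Definition relF (F K : {set {set T}}) :=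
  [\/ K = F /\ ~ hasE K x X, [/\ K = sig F, hasE K x X & ~ hasE K y Y] | rel3 F K].

Lemma uni_cancel (R1 R2 A : {set {set T}}) : R1 :|: A = R2 :|: A ->
  (forall S, S \in R1 -> S \notin A) -> (forall S, S \in R2 -> S \notin A) -> R1 = R2.
Proof.
move=> /setP H h1 h2; apply/setP=> S; move: (H S) (h1 S) (h2 S); rewrite !inE.
by case: (S \in A); case: (S \in R1); case: (S \in R2) => //= _; [move=> /(_ isT) | move=> _ /(_ isT)].
Qed.

Lemma r3_inj F1 F2 K : rel3 F1 K -> rel3 F2 K -> F1 = F2.
Proof.
move=> [v1 [R1 [J1 [J1' [v1X F1E K1 xv1 [J1c nX1 nZ1 _]]]]]].
move=> [v2 [R2 [J2 [J2' [v2X F2E K2 xv2 [J2c nX2 nZ2 _]]]]]].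
have v12 : v1 = v2.
  have : [set x; v1] \in K by rewrite K1 !inE eqxx orbT.
  rewrite K2 !inE => /orP[/orP[H|/eqP/set2_eq]|H].
  - by case: nX2; exists v1; split=> //; rewrite F2E !inE H.
  - by case=> [[_ ->]|[hx _]] //; move: v2X; rewrite -hx (negbTE xnX).
  - case: J2c => [[_ J0]|[c [exc _ _ Jc _]]]; first by move: H; rewrite J0 inE.
    move: H; rewrite Jc inE => /eqP/set2_eq [[hx _]|[hx _]]; first by move: hxy; rewrite hx eqxx.
    by move: exc; rewrite -hx e_irr.
subst v2.
have help : forall R J' c, K = R :|: [set [set x; v1]] :|: J' -> [set y; c] \notin R ->
    (J' = set0 \/ exists c', e y c' /\ J' = [set [set y; c']]) ->
    [set y; c] \in K -> J' = [set [set y; c]].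
  move=> R J' c KE ycR J'c; rewrite KE !inE => /orP[/orP[H|/eqP/set2_eq]|H].
  - by move: ycR; rewrite H.
  - case=> [[hx _]|[hy _]]; first by move: hxy; rewrite hx eqxx.
    by move: v1X; rewrite -hy (negbTE ynX).
  - case: J'c => [J0|[c' [eyc' J'E]]]; first by move: H; rewrite J0 inE.
    move: H; rewrite J'E inE => /eqP/set2_eq [[_ ->]|[hy _]] //.
    by move: eyc'; rewrite -hy e_irr.
have RF1 : forall S, S \in R1 -> S \in F1 by move=> S HS; rewrite F1E !inE HS.
have RF2 : forall S, S \in R2 -> S \in F2 by move=> S HS; rewrite F2E !inE HS.
have nR1 c : e x c -> e y c -> [set y; c] \notin R1.
  by move=> h1 h2; apply/negP=> /RF1; apply/negP; apply: nZ1.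
have nR2 c : e x c -> e y c -> [set y; c] \notin R2.
  by move=> h1 h2; apply/negP=> /RF2; apply/negP; apply: nZ2.
have J1c' : (J1' = set0) \/ exists c', e y c' /\ J1' = [set [set y; c']].
  by case: J1c => [[_ ->]|[c [_ eyc _ -> _]]]; [left | right; exists c].
have J2c' : (J2' = set0) \/ exists c', e y c' /\ J2' = [set [set y; c']].
  by case: J2c => [[_ ->]|[c [_ eyc _ -> _]]]; [left | right; exists c].
have inK1 c : J1' = [set [set y; c]] -> [set y; c] \in K by move=> E; rewrite K1 E !inE eqxx orbT.
have inK2 c : J2' = [set [set y; c]] -> [set y; c] \in K by move=> E; rewrite K2 E !inE eqxx orbT.
have ne0 c : set0 <> [set [set y; c]] :> {set {set T}}.
  by move/setP=> /(_ [set y; c]); rewrite !inE eqxx.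
have [JJ JJ'] : J1 = J2 /\ J1' = J2'.
  case: J1c => [[J10 J10']|[c1 [exc1 eyc1 J10 J1E yc1]]];
  case: J2c => [[J20 J20']|[c2 [exc2 eyc2 J20 J2E yc2]]].
  - by rewrite J10 J10' J20 J20'.
  - have := help R1 _ c2 K1 (nR1 c2 exc2 eyc2) J1c' (inK2 _ J2E).
    by rewrite J10' => /ne0.
  - have := help R2 _ c1 K2 (nR2 c1 exc1 eyc1) J2c' (inK1 _ J1E).
    by rewrite J20' => /ne0.
  - have := help R2 _ c1 K2 (nR2 c1 exc1 eyc1) J2c' (inK1 _ J1E).
    rewrite J2E => /setP /(_ [set y; c2]); rewrite !inE eqxx => /esym/eqP/set2_eq.
    case=> [[_ c21]|[hy _]]; last by move: eyc1; rewrite -hy e_irr.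
    by rewrite J10 J20 J1E c21.
have RR : R1 = R2.
  apply: (@uni_cancel _ _ ([set [set x; v1]] :|: J1')).
  - by rewrite !setUA -K1 JJ' -K2.
  - move=> S HS; rewrite !inE; apply/negP=> /orP[/eqP HS'|HS']; first by move: xv1; rewrite -HS' HS.
    case: J1c HS' => [[_ ->]|[c [_ _ _ -> ycR]]]; rewrite ?inE // => /eqP HS'.
    by move: ycR; rewrite -HS' HS.
  - move=> S HS; rewrite JJ' !inE; apply/negP=> /orP[/eqP HS'|HS']; first by move: xv2; rewrite -HS' HS.
    case: J2c HS' => [[_ ->]|[c [_ _ _ -> ycR]]]; rewrite ?inE // => /eqP HS'.
    by move: ycR; rewrite -HS' HS.
by rewrite F1E F2E RR JJ.
Qed.


Lemma rel3_has F K : rel3 F K -> hasE K x X /\ hasE K y Y.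
Proof.
move=> [v [R [J [J' [vX _ KE _ [_ _ _ hY]]]]]]; split=> //.
by exists v; split=> //; rewrite KE !inE eqxx orbT.
Qed.

Lemma relF_inj F1 F2 K : relF F1 K -> relF F2 K -> F1 = F2.
Proof.
case=> [[E1 n1]|[E1 h1 n1]|r1]; case=> [[E2 n2]|[E2 h2 n2]|r2].
- by rewrite -E1 -E2.
- by [].
- by case: n1; case: (rel3_has r2).
- by [].
- by apply: sig_inj; rewrite -E1 -E2.
- by case: n1; case: (rel3_has r2).
- by case: n2; case: (rel3_has r1).
- by case: n2; case: (rel3_has r1).
- exact: r3_inj r1 r2.
Qed.

Lemma ok_nXX F : okE e' F -> ~ hasE F x X.
Proof. by move=> ok [u [uX H]]; move: (ok _ _ H); apply/negP; apply: d_xX. Qed.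

Lemma class1 F : okE e' F -> ~ hasE F y X -> okE e F /\ relF F F.
Proof.
move=> ok nyX; split; last by apply: Or31; split=> //; exact: ok_nXX.
move=> u v H; case: (d_cases (ok _ _ H)) => [//|[[uy vX]|[vy uX]]].
- by case: nyX; exists v; split=> //; rewrite -uy.
- by case: nyX; exists u; split=> //; rewrite -vy set2C.
Qed.

Lemma sw_edge1 F z b : ~ hasE F y Y -> z = x \/ z = y -> [set z; b] \in F -> e' z b -> e (sw z) (sw b).
Proof.
move=> nyY zxy H ezb.
case: (eqVneq b x) => [bx|bx].
  case: zxy => zE; subst; first by rewrite d_irr in ezb.
  by rewrite swx swy; move: ezb; rewrite d_sym d_xy.
case: (eqVneq b y) => [byy|byy].
  case: zxy => zE; subst; last by rewrite d_irr in ezb.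
  by rewrite swx swy e_sym -d_xy.
rewrite (swo bx byy).
case: zxy => zE; subst.
  by rewrite swx; case: (d_x ezb byy).
rewrite swy; move: ezb; rewrite d_y // => /orP[eyb|]; last by rewrite inX => /andP[].
case exb : (e x b) => //; case: nyY; exists b; split=> //.
by rewrite inY eyb bx exb.
Qed.

Lemma sw_edge F a b : okE e' F -> ~ hasE F y Y -> [set a; b] \in F -> e (sw a) (sw b).
Proof.
move=> ok nyY H; have eab := ok _ _ H.
have [ax|ax] := eqVneq a x; first by apply: (sw_edge1 nyY) => //; left.
have [ay|ay] := eqVneq a y; first by apply: (sw_edge1 nyY) => //; right.
have [bx|bx] := eqVneq b x.
  rewrite e_sym; apply: (sw_edge1 nyY); [by left| by rewrite set2C | by rewrite d_sym].
have [byy|byy] := eqVneq b y.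
  rewrite e_sym; apply: (sw_edge1 nyY); [by right| by rewrite set2C | by rewrite d_sym].
by rewrite (swo ax ay) (swo bx byy) -d_out.
Qed.

Lemma class2 F : okE e' F -> hasE F y X -> ~ hasE F y Y -> okE e (sig F) /\ relF F (sig F).
Proof.
move=> ok [u [uX Hu]] nyY; split.
  move=> a b; rewrite sig_mem => H.
  by rewrite -(swK a) -(swK b); apply: (sw_edge ok nyY).
have ux : u != x by apply: contraTneq uX => ->; exact: xnX.
have uy : u != y by apply: contraTneq uX => ->; exact: ynX.
apply: Or32; split=> //.
  by exists u; split=> //; rewrite sig_mem swx (swo ux uy).
move=> [w [wY Hw]]; move: Hw; rewrite sig_mem swy.
have wx : w != x by apply: contraTneq wY => ->; exact: xnY.
have wy : w != y by apply: contraTneq wY => ->; exact: ynY.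
by rewrite (swo wx wy) => /ok; apply/negP; apply: d_xY.
Qed.

Definition C3out (F K : {set {set T}}) := exists v R J J',
  [/\ v \in X, F = R :|: [set [set y; v]] :|: J, K = R :|: [set [set x; v]] :|: J',
      [set y; v] \notin R &
  [/\ (J = set0 /\ J' = set0) \/
       exists c, [/\ e x c, e y c, J = [set [set x; c]], J' = [set [set y; c]] & [set y; c] \notin R]
    & exists w, [/\ w \in Y, [set y; w] \in F & forall u, [set y; u] \in F -> u = v \/ u = w]]].

Lemma class3 F K : okE e' F -> C3out F K -> okE e K /\ relF F K.
Proof.
move=> ok [v [R [J [J' [vX FE KE yvR [Jc [w [wY yw nb]]]]]]]].
have RF S : S \in R -> S \in F by move=> HS; rewrite FE !inE HS.
have nZ c : e x c -> e y c -> [set y; c] \notin F.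
  move=> exc eyc; apply/negP=> /nb [cv|cw]; subst.
  - by move: vX; rewrite inX eyc !andbF.
  - by move: wY; rewrite inY exc !andbF.
split.
  move=> a b; rewrite KE !inE => /orP[/orP[H|/eqP/set2_eq]|H].
  - case: (d_cases (ok _ _ (RF _ H))) => [//|[[ay bX]|[byy aX]]]; subst.
    + case: (nb b (RF _ H)) => bE; subst; first by rewrite H in yvR.
      by case: (XnY bX wY).
    + rewrite set2C in H; case: (nb a (RF _ H)) => aE; subst; first by rewrite H in yvR.
      by case: (XnY aX wY).
  - by move: vX; rewrite inX => /andP[exv _]; case=> [[-> ->]|[-> ->]] //; rewrite e_sym.
  - case: Jc H => [[_ ->]|[c [_ eyc _ -> _]]]; rewrite ?inE // => /eqP/set2_eq.
    by case=> [[-> ->]|[-> ->]] //; rewrite e_sym.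
apply: Or33; exists v, R, J, J'; split=> //.
- by apply/negP=> /RF Hx; apply: (ok_nXX ok); exists v.
- split=> //; first exact: ok_nXX.
  exists w; split=> //.
  move: yw; rewrite FE KE !inE => /orP[/orP[->//|/eqP/set2_eq]|].
    case=> [[_ wv]|[hy _]]; first by subst; case: (XnY vX wY).
    by move: vX; rewrite -hy (negbTE ynX).
  case: Jc => [[-> _]|[c [exc eyc -> _ _]]]; rewrite ?inE // => /eqP/set2_eq.
  case=> [[hy _]|[hy _]]; first by move: hxy; rewrite hy eqxx.
  by move: eyc; rewrite -hy e_irr.
Qed.


Lemma jn_catr P S Q : S != [::] -> jn P (S ++ Q) = jn P S.
Proof. by case: S => [|b S] //; case: P. Qed.

Definition RR P S Q := path_edges P :|: path_edges S :|: path_edges Q.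

Lemma seg P S Q : S != [::] -> (forall z, z \in S -> z \notin P) -> (forall z, z \in S -> z \notin Q) ->
  [/\ path_edges (P ++ S ++ Q) = RR P S Q :|: jn P S :|: jn S Q,
      path_edges (P ++ rev S ++ Q) = RR P S Q :|: jn P (rev S) :|: jn (rev S) Q
    & forall a z, (a \in P) || (a \in Q) -> z \in S -> [set a; z] \notin RR P S Q].
Proof.
move=> Sn SP SQ; split.
- by rewrite !E_cat jn_catr // /RR; ssolve.
- have Sn' : rev S != [::] by rewrite -size_eq0 size_rev size_eq0.
  by rewrite !E_cat jn_catr // E_rev /RR; ssolve.
move=> a z aPQ zS; rewrite /RR !inE; apply/negP=> /orP[/orP[]|] H.
- by move: (SP z zS); rewrite (E_mem H (set22 _ _)).
- have aS := E_mem H (set21 _ _).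
  by move: aPQ; rewrite (negbTE (SP a aS)) (negbTE (SQ a aS)).
- by move: (SQ z zS); rewrite (E_mem H (set22 _ _)).
Qed.

Lemma uniq_seg P S Q : uniq (P ++ S ++ Q) ->
  (forall z, z \in S -> z \notin P) /\ (forall z, z \in S -> z \notin Q).
Proof.
rewrite cat_uniq => /and3P[_ H1 H2]; move: H2; rewrite cat_uniq => /and3P[_ H3 _].
split=> z zS.
- by apply: (hasPn H1); rewrite mem_cat zS.
- by apply/negP=> zQ; move/hasPn: H3 => /(_ z zQ); rewrite zS.
Qed.


Lemma uniq_mid A D z : uniq (A ++ z :: D) -> z \notin A /\ z \notin D.
Proof.
rewrite cat_uniq => /and3P[_ H1 H2]; split; last by case/andP: H2.
by apply/negP=> zA; move/hasPn: H1 => /(_ z (mem_head _ _)); rewrite zA.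
Qed.

Lemma nb_irr F u : okE e' F -> [set y; u] \in F -> u != y.
Proof. by move=> ok /ok; apply: contraTneq => ->; rewrite d_irr. Qed.

Lemma pS1 A1 w v B1 C : let s := rcons A1 w ++ y :: (v :: B1) ++ x :: C in
  uniq s -> okE e' (path_edges s) -> v \in X -> w \in Y -> [set y; w] \in path_edges s ->
  exists s', perm_eq s s' /\ C3out (path_edges s) (path_edges s').
Proof.
move=> s U ok vX wY yw.
set P := rcons (rcons A1 w) y; set S := v :: B1; set Q := x :: C.
have sE : s = P ++ S ++ Q by rewrite /P cat_rcons.
have [SP SQ] := uniq_seg (etrans (esym (congr1 uniq sE)) U).
have [E1 E2 Rn] := seg (isT : S != [::]) SP SQ.
have [S0 [a Sa]] : exists S0 a, S = rcons S0 a by exists (belast v B1), (last v B1); rewrite /S lastI.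
have j1 : jn P S = [set [set y; v]] by rewrite /P /S jn_rcons.
have j2 : jn S Q = [set [set a; x]] by rewrite Sa /Q jn_rcons.
have j3 : jn P (rev S) = [set [set y; a]] by rewrite Sa rev_rcons /P jn_rcons.
have j4 : jn (rev S) Q = [set [set v; x]] by rewrite /S rev_cons /Q jn_rcons.
have yP : y \in P by rewrite /P mem_rcons mem_head.
have aS : a \in S by rewrite Sa mem_rcons mem_head.
have vS : v \in S by rewrite mem_head.
have ay : a != y by apply: contraTneq yP => <-; exact: SP.
have xa : [set x; a] \in path_edges s by rewrite sE E1 j2 set2C !inE eqxx orbT.
have [exa eya] := d_x (ok _ _ xa) ay.
exists (P ++ rev S ++ Q); split.
  by rewrite sE perm_cat2l perm_cat2r perm_sym perm_rev.
exists v, (RR P S Q), [set [set x; a]], [set [set y; a]]; split=> //.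
- by rewrite sE E1 j1 j2 [[set a; x]]set2C.
- by rewrite E2 j3 j4 [[set v; x]]set2C; apply/setP=> Z; rewrite !inE; bsplit.
- by apply: Rn; rewrite ?yP.
split; first by right; exists a; split=> //; apply: Rn; rewrite ?yP.
exists w; split=> // u Hu.
have [yA yD] := uniq_mid U.
case: (nbr yA yD Hu) => [uy|[[A' HA]|[D' HD]]].
- by move: (nb_irr ok Hu); rewrite uy eqxx.
- by right; case: (rcons_inj HA).
- by left; case: HD.
Qed.

Lemma pS2 A1 v w B1 C : let s := rcons A1 v ++ y :: (w :: B1) ++ x :: C in
  uniq s -> okE e' (path_edges s) -> v \in X -> w \in Y -> [set y; w] \in path_edges s ->
  exists s', perm_eq s s' /\ C3out (path_edges s) (path_edges s').
Proof.
move=> s U ok vX wY yw.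
set P := rcons A1 v; set S := y :: rcons (w :: B1) x.
have sE : s = P ++ S ++ C by rewrite /s /P /S; congr (_ ++ _); rewrite /= cat_rcons.
have [yA yD] := uniq_mid U.
have nbs : forall u, [set y; u] \in path_edges s -> u = v \/ u = w.
  move=> u Hu; case: (nbr yA yD Hu) => [uy|[[A' HA]|[D' HD]]].
  - by move: (nb_irr ok Hu); rewrite uy eqxx.
  - by left; case: (rcons_inj HA).
  - by right; case: HD.
clearbody s.
have [SP SQ] := uniq_seg (etrans (esym (congr1 uniq sE)) U).
have [E1 E2 Rn] := seg (isT : S != [::]) SP SQ.
have j1 : jn P S = [set [set v; y]] by rewrite /P /S jn_rcons.
have Sr : rev S = rcons (x :: rev (w :: B1)) y by rewrite /S rev_cons rev_rcons.
have Sc : S = rcons (y :: w :: B1) x by rewrite /S rcons_cons.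
have j3 : jn P (rev S) = [set [set v; x]] by rewrite Sr rcons_cons /P jn_rcons.
have vP : v \in P by rewrite /P mem_rcons mem_head.
have yS : y \in S by rewrite mem_head.
have yvR : [set y; v] \notin RR P S C by rewrite set2C; apply: Rn; rewrite ?vP.
exists (P ++ rev S ++ C); split.
  by rewrite sE perm_cat2l perm_cat2r perm_sym perm_rev.
clear yA yD; case: C sE E1 E2 Rn SQ yvR => [|c C1] sE E1 E2 Rn SQ yvR.
  exists v, (RR P S [::]), set0, set0; split=> //.
  - by rewrite sE E1 j1 !jns0 [[set v; y]]set2C.
  - by rewrite E2 j3 !jns0 [[set v; x]]set2C.
  by split; [left | exists w].
set Q := c :: C1.
have cQ : c \in Q by rewrite mem_head.
have cy : c != y by apply: contraTneq cQ => ->; exact: SQ.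
have j2 : jn S Q = [set [set x; c]] by rewrite Sc jn_rcons.
have j4 : jn (rev S) Q = [set [set y; c]] by rewrite Sr jn_rcons.
have xc : [set x; c] \in path_edges s by rewrite sE E1 j2 !inE eqxx orbT.
have [exc eyc] := d_x (ok _ _ xc) cy.
exists v, (RR P S Q), [set [set x; c]], [set [set y; c]]; split=> //.
- by rewrite sE E1 j1 j2 [[set v; y]]set2C.
- by rewrite E2 j3 j4 [[set v; x]]set2C.
split; last by exists w.
right; exists c; split=> //.
by rewrite set2C; apply: Rn; rewrite ?cQ ?orbT.
Qed.


Lemma path3A A B C : let s := A ++ y :: B ++ x :: C in
  uniq s -> okE e' (path_edges s) -> hasE (path_edges s) y X -> hasE (path_edges s) y Y ->
  exists s', perm_eq s s' /\ C3out (path_edges s) (path_edges s').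
Proof.
move=> s U ok [v [vX yv]] [w [wY yw]].
have [yA yD] := uniq_mid U.
have vx : v != x by apply: contraTneq vX => ->; exact: xnX.
have wx : w != x by apply: contraTneq wY => ->; exact: xnY.
case: (nbr yA yD yv) => [vy|[[A1 HA]|[D1 HD]]].
- by move: (nb_irr ok yv); rewrite vy eqxx.
- case: (nbr yA yD yw) => [wy|[[A2 HA2]|[D2 HD2]]].
  + by move: (nb_irr ok yw); rewrite wy eqxx.
  + by move: HA2; rewrite HA => /rcons_inj [_ vw]; subst; case: (XnY vX wY).
  + case: B @s U ok yv yw yD HD2 => [|b B1] s U ok yv yw yD [bw _].
      by move: wx; rewrite bw eqxx.
    subst; exact: pS2.
- case: B @s U ok yv yw yD HD => [|b B1] s U ok yv yw yD [bv _].
    by move: vx; rewrite bv eqxx.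
  subst b.
  case: (nbr yA yD yw) => [wy|[[A2 HA2]|[D2 HD2]]].
  + by move: (nb_irr ok yw); rewrite wy eqxx.
  + by subst; exact: pS1.
  + by case: HD2 => wv _; subst; case: (XnY vX wY).
Qed.

Lemma path3 s : uniq s -> x \in s -> y \in s -> okE e' (path_edges s) ->
  hasE (path_edges s) y X -> hasE (path_edges s) y Y ->
  exists s', perm_eq s s' /\ C3out (path_edges s) (path_edges s').
Proof.
move=> U xs ys; case/splitPr: ys U xs => A D U.
rewrite mem_cat inE (negbTE hxy) /= => /orP[xA|xD].
  rewrite -(E_rev (A ++ y :: D)) => ok hX hY.
  have xrA : x \in rev A by rewrite mem_rev.
  have [B [C HA]] : exists B C, rev A = B ++ x :: C by case/splitPr: xrA => B C; exists B, C.
  have sr : rev (A ++ y :: D) = rev D ++ y :: B ++ x :: C by rewrite rev_cat rev_cons cat_rcons HA.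
  move: ok hX hY; rewrite sr => ok hX hY.
  have U' : uniq (rev D ++ y :: B ++ x :: C) by rewrite -sr rev_uniq.
  have [s' [ps' C3]] := path3A U' ok hX hY.
  exists s'; split; last exact: C3.
  by rewrite -(perm_rev (A ++ y :: D)) sr.
case/splitPr: xD U => B C U ok hX hY.
exact: (path3A U ok hX hY).
Qed.


Lemma cycE L : cycle_edges (x :: L) = path_edges (x :: rcons L x).
Proof. by []. Qed.

Lemma cS1 C v B1 w : let s := x :: C ++ y :: v :: B1 in
  uniq s -> okE e' (cycle_edges s) -> v \in X -> w \in Y -> [set y; w] \in cycle_edges s ->
  (forall u, [set y; u] \in cycle_edges s -> u = v \/ u = w) ->
  exists s', perm_eq s s' /\ C3out (cycle_edges s) (cycle_edges s').
Proof.
move=> s U ok vX wY yw nbs.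
set P := rcons (x :: C) y; set S := v :: B1; set Q := [:: x].
have sPS : s = P ++ S ++ [::] by rewrite cats0 /P cat_rcons.
have [SP _] := uniq_seg (etrans (esym (congr1 uniq sPS)) U).
have xP : x \in P by rewrite /P mem_rcons !inE eqxx orbT.
have SQ : forall z, z \in S -> z \notin Q.
  by move=> z zS; rewrite inE; apply: contraTneq xP => <-; exact: SP.
have WE : cycle_edges s = path_edges (P ++ S ++ Q).
  by rewrite cycE /P /S /Q rcons_cat rcons_cons cat_rcons cats1.
have [E1 E2 Rn] := seg (isT : S != [::]) SP SQ.
have [S0 [a Sa]] : exists S0 a, S = rcons S0 a by exists (belast v B1), (last v B1); rewrite /S lastI.
have j1 : jn P S = [set [set y; v]] by rewrite /P /S jn_rcons.
have j2 : jn S Q = [set [set a; x]] by rewrite Sa /Q jn_rcons.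
have j3 : jn P (rev S) = [set [set y; a]] by rewrite Sa rev_rcons /P jn_rcons.
have j4 : jn (rev S) Q = [set [set v; x]] by rewrite /S rev_cons /Q jn_rcons.
have yP : y \in P by rewrite /P mem_rcons mem_head.
have aS : a \in S by rewrite Sa mem_rcons mem_head.
have vS : v \in S by rewrite mem_head.
have ay : a != y by apply: contraTneq yP => <-; exact: SP.
have xa : [set x; a] \in cycle_edges s by rewrite WE E1 j2 set2C !inE eqxx orbT.
have [exa eya] := d_x (ok _ _ xa) ay.
exists (x :: C ++ y :: rev S); split.
  by rewrite /s -!cat_cons perm_cat2l perm_cons perm_sym perm_rev.
exists v, (RR P S Q), [set [set x; a]], [set [set y; a]]; split=> //.
- by rewrite WE E1 j1 j2 [[set a; x]]set2C.
- rewrite cycE rcons_cat rcons_cons -cats1 -cat_cons -cat_rcons -/P.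
  by rewrite E2 j3 j4 [[set v; x]]set2C; apply/setP=> Z; rewrite !inE; bsplit.
- by apply: Rn; rewrite ?yP.
split; first by right; exists a; split=> //; apply: Rn; rewrite ?yP.
by exists w.
Qed.

Lemma cS2 C0 v c C1 B w : rcons C0 v = c :: C1 -> let s := x :: (c :: C1) ++ y :: B in
  uniq s -> okE e' (cycle_edges s) -> v \in X -> w \in Y -> [set y; w] \in cycle_edges s ->
  (forall u, [set y; u] \in cycle_edges s -> u = v \/ u = w) ->
  exists s', perm_eq s s' /\ C3out (cycle_edges s) (cycle_edges s').
Proof.
move=> HC s U ok vX wY yw nbs.
set P := [:: x]; set S := c :: C1; set Q := y :: rcons B x.
have sPS : s = P ++ S ++ (y :: B) by [].
have [SP SQ0] := uniq_seg (etrans (esym (congr1 uniq sPS)) U).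
have SQ : forall z, z \in S -> z \notin Q.
  move=> z zS; move: (SQ0 z zS) (SP z zS); rewrite /Q !inE mem_rcons !inE.
  by case: (z == y); case: (z == x); case: (z \in B).
have WE : cycle_edges s = path_edges (P ++ S ++ Q) by rewrite cycE rcons_cat rcons_cons.
have [E1 E2 Rn] := seg (isT : S != [::]) SP SQ.
have j1 : jn P S = [set [set x; c]] by [].
have j2 : jn S Q = [set [set v; y]] by rewrite /S -HC jn_rcons.
have j3 : jn P (rev S) = [set [set x; v]] by rewrite /S -HC rev_rcons.
have j4 : jn (rev S) Q = [set [set c; y]] by rewrite /S rev_cons jn_rcons.
have yQ : y \in Q by rewrite mem_head.
have cS : c \in S by rewrite mem_head.
have vS : v \in S by rewrite /S -HC mem_rcons mem_head.
have cy : c != y by apply: contraTneq yQ => <-; exact: SQ.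
have xc : [set x; c] \in cycle_edges s by rewrite WE E1 j1 !inE eqxx !orbT.
have [exc eyc] := d_x (ok _ _ xc) cy.
exists (x :: rev S ++ y :: B); split.
  by rewrite /s perm_cons perm_cat2r perm_sym perm_rev.
exists v, (RR P S Q), [set [set x; c]], [set [set y; c]]; split=> //.
- by rewrite WE E1 j1 j2 [[set v; y]]set2C; apply/setP=> Z; rewrite !inE; bsplit.
- by rewrite cycE rcons_cat rcons_cons E2 j3 j4 [[set c; y]]set2C.
- by apply: Rn; rewrite ?yQ ?orbT.
split; first by right; exists c; split=> //; apply: Rn; rewrite ?yQ ?orbT.
by exists w.
Qed.


Lemma cyc3A C B : let s := x :: C ++ y :: B in
  uniq s -> okE e' (cycle_edges s) -> hasE (cycle_edges s) y X -> hasE (cycle_edges s) y Y ->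
  exists s', perm_eq s s' /\ C3out (cycle_edges s) (cycle_edges s').
Proof.
move=> s U ok [v [vX yv]] [w [wY yw]].
have WE : cycle_edges s = path_edges ((x :: C) ++ y :: rcons B x) by rewrite cycE rcons_cat rcons_cons.
have [yA yB] := uniq_mid (U : uniq ((x :: C) ++ y :: B)).
have yB' : y \notin rcons B x by rewrite mem_rcons inE eq_sym (negbTE hxy).
have vx : v != x by apply: contraTneq vX => ->; exact: xnX.
have wx : w != x by apply: contraTneq wY => ->; exact: xnY.
have NB u : [set y; u] \in cycle_edges s ->
    u = y \/ (exists A', x :: C = rcons A' u) \/ (exists D', rcons B x = u :: D').
  by rewrite WE; apply: nbr.
have nuy u : [set y; u] \in cycle_edges s -> u = y -> False.
  by move=> H uy; move: (nb_irr ok H); rewrite uy eqxx.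
case: (NB v yv) => [/(nuy _ yv)//|[[A1 HA]|[D1 HD]]].
- case: (NB w yw) => [/(nuy _ yw)//|[[A2 HA2]|[D2 HD2]]].
  + by move: HA2; rewrite HA => /rcons_inj [_ vw]; subst; case: (XnY vX wY).
  have nbs u : [set y; u] \in cycle_edges s -> u = v \/ u = w.
    move=> H; case/NB: (H) => [uy|[[A' HA']|[D' HD']]]; first by case: (nuy u H uy).
      by left; move: HA'; rewrite HA => /rcons_inj [].
    by right; move: HD'; rewrite HD2 => [[]].
  case: A1 HA => [|a A1] HA.
    by case: HA => xv; move: vx; rewrite xv eqxx.
  case: HA => _ HC.
  case: C @s U ok yv yw nbs HC {WE yA NB nuy} => [|c C1] s U ok yv yw nbs HC.
    by case: A1 HC.
  exact: (cS2 (esym HC) U ok vX wY yw nbs).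
- case: B @s U ok yv yw HD NB nuy {WE yB yB'} => [|b B1] s U ok yv yw [bv _] NB nuy.
    by move: vx; rewrite bv eqxx.
  subst b.
  case: (NB w yw) => [/(nuy _ yw)//|[[A2 HA2]|[D2 HD2]]].
  + have nbs u : [set y; u] \in cycle_edges s -> u = v \/ u = w.
      move=> H; case/NB: (H) => [uy|[[A' HA']|[D' HD']]]; first by case: (nuy u H uy).
        by right; move: HA'; rewrite HA2 => /rcons_inj [].
      by left; case: HD'.
    exact: (cS1 U ok vX wY yw nbs).
  + by case: HD2 => wv _; subst; case: (XnY vX wY).
Qed.


Lemma cyc3 s : uniq s -> x \in s -> y \in s -> okE e' (cycle_edges s) ->
  hasE (cycle_edges s) y X -> hasE (cycle_edges s) y Y ->
  exists s', perm_eq s s' /\ C3out (cycle_edges s) (cycle_edges s').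
Proof.
move=> U xs ys.
have [A [D sE]] : exists A D, s = A ++ x :: D by case/splitPr: xs => A D; exists A, D.
have ce : cycle_edges s = cycle_edges (x :: D ++ A) by rewrite sE cycle_edges_rot.
have ps : perm_eq s (x :: D ++ A) by rewrite sE perm_catC.
have U1 : uniq (x :: D ++ A) by rewrite -(perm_uniq ps).
have y1 : y \in D ++ A.
  by move: ys; rewrite (perm_mem ps) inE eq_sym (negbTE hxy).
have [C [B DA]] : exists C B, D ++ A = C ++ y :: B by case/splitPr: y1 => C B; exists C, B.
rewrite ce DA => ok hX hY.
rewrite DA in U1 ps.
have [s' [ps' C3]] := cyc3A U1 ok hX hY.
by exists s'; split=> //; apply: perm_trans ps ps'.
Qed.

Lemma all_in s : size s = #|T| -> uniq s -> forall z, z \in s.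
Proof.
move=> sz /card_uniqP cu z; apply/negPn/negP=> zn.
have h := cardC (mem s); rewrite cu sz -[X in _ = X]addn0 in h.
move/eqP: h; rewrite eqn_add2l => /eqP /card0_eq /(_ z).
by rewrite !inE zn.
Qed.

Lemma card_le (A B : {set {set {set T}}}) (r : {set {set T}} -> {set {set T}} -> Prop) :
  (forall F, F \in A -> exists K, K \in B /\ r F K) ->
  (forall F1 F2 K, r F1 K -> r F2 K -> F1 = F2) -> #|A| <= #|B|.
Proof.
move=> ex inj.
pose f F := epsilon (inhabits set0) (fun K => K \in B /\ r F K).
have fP F : F \in A -> f F \in B /\ r F (f F).
  by move=> FA; apply: (@epsilon_spec _ (inhabits set0) (fun K => K \in B /\ r F K)); exact: ex.
rewrite -(card_in_imset (f := f)).
  apply: subset_leq_card; apply/subsetP=> K /imsetP [F FA ->]; by case: (fP F FA).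
move=> F1 F2 h1 h2 E; apply: (inj _ _ (f F1)); first by case: (fP F1 h1).
by rewrite E; case: (fP F2 h2).
Qed.

Lemma hamP (g : rel T) F : symmetric g -> F \in ham_paths g <->
  exists s, [/\ size s = #|T|, uniq s, okE g (path_edges s) & F = path_edges s].
Proof.
move=> gs; rewrite inE; split.
  case/existsP=> t /and3P [Ut Pt /eqP FE]; exists (val t); split=> //; first exact: size_tuple.
  by apply/epathP.
case=> s [sz Us oks FE]; apply/existsP.
have sz' : size s == #|T| by rewrite sz.
exists (Tuple sz'); rewrite /= Us FE eqxx andbT /=; exact/epathP.
Qed.

Lemma hamCP (g : rel T) F : symmetric g -> F \in ham_cycles g <->
  2 < #|T| /\ exists s, [/\ size s = #|T|, uniq s, okE g (cycle_edges s) & F = cycle_edges s].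
Proof.
move=> gs; rewrite inE; split.
  case/existsP=> t /and4P [h2 Ut Pt /eqP FE]; split=> //; exists (val t); split=> //; first exact: size_tuple.
  by apply/cycleP.
case=> h2 [s [sz Us oks FE]]; apply/existsP.
have sz' : size s == #|T| by rewrite sz.
exists (Tuple sz'); rewrite /= h2 Us FE eqxx andbT /=; exact/cycleP.
Qed.

Lemma cyc_map s : cycle_edges (map sw s) = sig (cycle_edges s).
Proof.
case: s => [|a p]; first by rewrite /sig imset0.
have -> : cycle_edges (map sw (a :: p)) = path_edges (map sw (a :: rcons p a)) by rewrite /= map_rcons.
by rewrite E_map.
Qed.

Lemma paths_le : #|ham_paths e'| <= #|ham_paths e|.
Proof.
apply: (card_le (r := relF)); last exact: relF_inj.
move=> F /(hamP _ d_sym) [s [sz Us ok FE]].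
have okF : okE e' F by rewrite FE.
case: (classic (hasE F y X)) => hX.
  case: (classic (hasE F y Y)) => hY.
    have [s' [ps C3]] := path3 Us (all_in sz Us x) (all_in sz Us y) ok (eq_ind _ (fun G => hasE G y X) hX _ FE) (eq_ind _ (fun G => hasE G y Y) hY _ FE).
    rewrite -FE in C3; have [okK rK] := class3 okF C3.
    exists (path_edges s'); split=> //; apply/(hamP _ e_sym); exists s'; split=> //.
    - by rewrite -(perm_size ps).
    - by rewrite -(perm_uniq ps).
  have [okK rK] := class2 okF hX hY.
  exists (sig F); split=> //; apply/(hamP _ e_sym); exists (map sw s); split.
  - by rewrite size_map.
  - by rewrite (map_inj_uniq sw_inj).
  - by rewrite E_map -FE.
  - by rewrite E_map -FE.
have [okK rK] := class1 okF hX.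
by exists F; split=> //; apply/(hamP _ e_sym); exists s; split=> //; rewrite -FE.
Qed.

Lemma cycles_le : #|ham_cycles e'| <= #|ham_cycles e|.
Proof.
apply: (card_le (r := relF)); last exact: relF_inj.
move=> F /(hamCP _ d_sym) [h2 [s [sz Us ok FE]]].
have okF : okE e' F by rewrite FE.
case: (classic (hasE F y X)) => hX.
  case: (classic (hasE F y Y)) => hY.
    have [s' [ps C3]] := cyc3 Us (all_in sz Us x) (all_in sz Us y) ok (eq_ind _ (fun G => hasE G y X) hX _ FE) (eq_ind _ (fun G => hasE G y Y) hY _ FE).
    rewrite -FE in C3; have [okK rK] := class3 okF C3.
    exists (cycle_edges s'); split=> //; apply/(hamCP _ e_sym); split=> //; exists s'; split=> //.
    - by rewrite -(perm_size ps).
    - by rewrite -(perm_uniq ps).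
  have [okK rK] := class2 okF hX hY.
  exists (sig F); split=> //; apply/(hamCP _ e_sym); split=> //; exists (map sw s); split.
  - by rewrite size_map.
  - by rewrite (map_inj_uniq sw_inj).
  - by rewrite cyc_map -FE.
  - by rewrite cyc_map -FE.
have [okK rK] := class1 okF hX.
by exists F; split=> //; apply/(hamCP _ e_sym); split=> //; exists s; split=> //; rewrite -FE.
Qed.

End G.

Theorem mainTheorem9 (T : finType) (e : rel T)
  (e_sym : symmetric e) (e_irr : irreflexive e) (x y : T) (hxy : x != y) :
  h0 (diamond e x y) <= h0 e /\ h1 (diamond e x y) <= h1 e.
Proof.
split; [exact: (cycles_le e_sym e_irr hxy) | exact: (paths_le e_sym e_irr hxy)].
Qed.
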